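(* Let $(V_1, V_2)$ be an isometric pair such that $\dim E_1 < \infty$ and $[V_2^*, V_1]$ has finite rank. Then $C(V_1, V_2)$ has finite rank.
   Context: All Hilbert spaces are complex and separable. An isometric pair is a pair $(V_1,V_2)$ of commuting isometries. $[V_2^*,V_1] := V_2^*V_1 - V_1V_2^*$. $C(V_1,V_2) := I - V_1V_1^* - V_2V_2^* + V_1V_2V_1^*V_2^*$ and $E_1 := \ker(C(V_1,V_2)-I)$. *)

(* Defs.v *)
From HB Require Import structures.
From mathcomp Require Import all_boot all_order all_algebra.
From mathcomp Require Import reals.
From mathcomp.real_closed Require Import complex.
Set Implicit Arguments. Unset Strict Implicit. Unset Printing Implicit Defensive.
Import Order.TTheory GRing.Theory Num.Theory.
Local Open Scope ring_scope.

Section Hilbert.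
Variable R : realType.
Local Notation C := (R[i]).
Variable H : lmodType C.
Variable inner : H -> H -> C.

Definition hnorm (x : H) : R := Num.sqrt (complex.Re (inner x x)).

Definition is_hilbert : Prop :=
  (forall (a : C) (x y z : H), inner (a *: x + y) z = a * inner x z + inner y z) /\
      (forall x y : H, inner y x = (inner x y)^*) /\
      (forall x : H, 0 <= inner x x) /\
      (forall x : H, inner x x = 0 -> x = 0) /\
      (forall u : nat -> H,
         (forall e : R, 0 < e -> exists N, forall m n, (N <= m)%N -> (N <= n)%N ->
            hnorm (u m - u n) < e) ->
         exists l : H, forall e : R, 0 < e -> exists N, forall n, (N <= n)%N ->
            hnorm (u n - l) < e) /\
      (exists d : nat -> H, forall (x : H) (e : R), 0 < e -> exists n, hnorm (x - d n) < e).

Definition bounded_op (T : H -> H) : Prop :=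
  (forall (a : C) (x y : H), T (a *: x + y) = a *: T x + T y) /\
  exists M : R, forall x, hnorm (T x) <= M * hnorm x.

Definition is_adjoint (T Ts : H -> H) : Prop :=
  forall x y : H, inner (T x) y = inner x (Ts y).

Definition finite_dim (S : H -> Prop) : Prop :=
  exists s : seq H, forall x, S x ->
    exists c : 'I_(size s) -> C, x = \sum_(i < size s) c i *: s`_i.

Definition finite_rank (T : H -> H) : Prop := finite_dim (fun y => exists x, y = T x).

Definition isometric_pair (V1 V1s V2 V2s : H -> H) : Prop :=
  bounded_op V1 /\ bounded_op V2 /\ is_adjoint V1 V1s /\ is_adjoint V2 V2s /\
  (forall x, V1s (V1 x) = x) /\ (forall x, V2s (V2 x) = x) /\
  (forall x, V1 (V2 x) = V2 (V1 x)).

(* [V2^*, V1] = V2^* V1 - V1 V2^* *)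
Definition commutator (V1 V2s : H -> H) (x : H) : H := V2s (V1 x) - V1 (V2s x).

Definition defect (V1 V1s V2 V2s : H -> H) (x : H) : H :=
  x - V1 (V1s x) - V2 (V2s x) + V1 (V2 (V1s (V2s x))).

Definition E1 (V1 V1s V2 V2s : H -> H) (x : H) : Prop :=
  defect V1 V1s V2 V2s x - x = 0.

End Hilbert.

(* Main.v *)
Require Import Defs.
From HB Require Import structures.
From mathcomp Require Import all_boot all_order all_algebra.
From mathcomp Require Import reals.
From mathcomp.real_closed Require Import complex.
From Stdlib Require Import Classical.
Import Order.TTheory GRing.Theory Num.Theory.
Local Open Scope ring_scope.

Definition spanP {R : realType} {H : lmodType R[i]} (s : seq H) (x : H) : Prop :=
  exists c : 'I_(size s) -> R[i], x = \sum_(i < size s) c i *: s`_i.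

Lemma span_nil {R : realType} {H : lmodType R[i]} (x : H) : spanP [::] x <-> x = 0.
Proof. split; [by case=> c ->; rewrite big_ord0 | move=> ->; exists (fun _ => 0); by rewrite big_ord0]. Qed.

Lemma span_cons {R : realType} {H : lmodType R[i]} (a : H) s x :
  spanP (a :: s) x <-> exists k w, spanP s w /\ x = k *: a + w.
Proof.
split.
  case=> c ->; rewrite big_ord_recl /=.
  exists (c ord0), (\sum_(i < size s) c (lift ord0 i) *: s`_i); split => //.
  by exists (fun i => c (lift ord0 i)).
case=> k [w [[c ->] ->]].
exists (fun i : 'I_(size s).+1 => if unlift ord0 i is Some j then c j else k).
rewrite big_ord_recl /= unlift_none; congr (_ + _).
by apply: eq_bigr => i _; rewrite liftK.
Qed.

Definition lin {R : realType} {H : lmodType R[i]} (f : H -> H) : Prop :=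
  forall (a : R[i]) x y, f (a *: x + y) = a *: f x + f y.

Lemma lin0 {R : realType} {H : lmodType R[i]} {f : H -> H} : lin f -> f 0 = 0.
Proof. move=> hf; have h := hf 1 0 0; rewrite scaler0 addr0 scale1r in h.
have e : f 0 + f 0 - f 0 = f 0 - f 0 by rewrite -h.
by rewrite addrK subrr in e. Qed.

Lemma linD {R : realType} {H : lmodType R[i]} {f : H -> H} : lin f -> forall x y, f (x + y) = f x + f y.
Proof. by move=> hf x y; have := hf 1 x y; rewrite !scale1r. Qed.

Lemma linZ {R : realType} {H : lmodType R[i]} {f : H -> H} : lin f -> forall a x, f (a *: x) = a *: f x.
Proof. by move=> hf a x; rewrite -[a *: x]addr0 (hf _ _ _) lin0 // addr0. Qed.

Lemma linN {R : realType} {H : lmodType R[i]} {f : H -> H} : lin f -> forall x, f (- x) = - f x.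
Proof. by move=> hf x; rewrite -scaleN1r linZ // scaleN1r. Qed.

Lemma linB {R : realType} {H : lmodType R[i]} {f : H -> H} : lin f -> forall x y, f (x - y) = f x - f y.
Proof. by move=> hf x y; rewrite linD // linN. Qed.

Lemma lin_comp {R : realType} {H : lmodType R[i]} {f g : H -> H} : lin f -> lin g -> lin (fun x => f (g x)).
Proof. by move=> hf hg a x y; rewrite (hg _ _ _) (hf _ _ _). Qed.

Lemma span0 {R : realType} {H : lmodType R[i]} (s : seq H) : spanP s 0.
Proof. by exists (fun _ => 0); rewrite big1 // => i _; rewrite scale0r. Qed.

Lemma span_cat {R : realType} {H : lmodType R[i]} (s1 s2 : seq H) u v :
  spanP s1 u -> spanP s2 v -> spanP (s1 ++ s2) (u + v).
Proof.
elim: s1 u => [|a s1 IH] u /=.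
  by move=> /span_nil -> hv; rewrite add0r.
move=> /span_cons [k [w [hw ->]]] hv; apply/span_cons.
by exists k, (w + v); split; [apply: IH | rewrite addrA].
Qed.

Lemma span_map {R : realType} {H : lmodType R[i]} (f : H -> H) (s : seq H) u :
  lin f -> spanP s u -> spanP (map f s) (f u).
Proof.
move=> hf; elim: s u => [|a s IH] u /=.
  by move=> /span_nil ->; rewrite lin0 //; apply/span_nil.
move=> /span_cons [k [w [hw ->]]]; apply/span_cons.
by exists k, (f w); split; [apply: IH | rewrite hf].
Qed.

Lemma spanZD {R : realType} {H : lmodType R[i]} (s : seq H) k u v :
  spanP s u -> spanP s v -> spanP s (k *: u + v).
Proof.
elim: s u v => [|a s IH] u v.
  by move=> /span_nil -> /span_nil ->; rewrite scaler0 addr0; apply/span_nil.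
move=> /span_cons [k1 [w1 [h1 ->]]] /span_cons [k2 [w2 [h2 ->]]]; apply/span_cons.
exists (k * k1 + k2), (k *: w1 + w2); split; first exact: IH.
by rewrite scalerDr scalerA scalerDl addrACA.
Qed.

Lemma preimage {R : realType} {H : lmodType R[i]} (f : H -> H) (e : seq H) :
  lin f -> (forall y, f y = 0 -> spanP e y) ->
  forall g, exists t, forall y, spanP g (f y) -> spanP (t ++ e) y.
Proof.
move=> hf he; elim=> [|a g IH].
  by exists [::] => y /span_nil /he.
case: IH => t' IH.
case: (classic (exists y0, spanP g (f y0 - a))) => [[y0 hy0]|hno].
  exists (y0 :: t') => y /span_cons [k [w [hw hfy]]] /=.
  apply/span_cons; exists k, (y - k *: y0); split; last by rewrite addrC subrK.
  apply: IH; have -> : f (y - k *: y0) = (- k) *: (f y0 - a) + w.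
    by rewrite linB // linZ // hfy scaleNr scalerBr opprB addrAC.
  exact: spanZD.
exists t' => y /span_cons [k [w [hw hfy]]].
have [k0|kn0] := eqVneq k 0.
  by apply: IH; rewrite hfy k0 scale0r add0r.
exfalso; apply: hno; exists (k^-1 *: y).
rewrite linZ // hfy scalerDr scalerA mulVf // scale1r addrAC subrr add0r.
by rewrite -[_ *: w]addr0; apply: spanZD => //; apply: span0.
Qed.

Definition flin {R : realType} {H : lmodType R[i]} (phi : H -> R[i]) : Prop :=
  forall (a : R[i]) x y, phi (a *: x + y) = a * phi x + phi y.

Fixpoint allz {R : realType} {H : lmodType R[i]} (P : seq (H -> R[i])) (y : H) : Prop :=
  match P with [::] => True | phi :: P' => phi y = 0 /\ allz P' y end.

Fixpoint alllin {R : realType} {H : lmodType R[i]} (P : seq (H -> R[i])) : Prop :=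
  match P with [::] => True | phi :: P' => flin phi /\ alllin P' end.

Lemma allz_map {R : realType} {H : lmodType R[i]} (P : seq (H -> R[i])) (g : H -> H) y :
  allz (map (fun psi x => psi (g x)) P) y <-> allz P (g y).
Proof. by elim: P => [|p P IH] //=; rewrite IH. Qed.

Lemma alllin_map {R : realType} {H : lmodType R[i]} (P : seq (H -> R[i])) (g : H -> H) :
  lin g -> alllin P -> alllin (map (fun psi x => psi (g x)) P).
Proof.
move=> hg; elim: P => [|p P IH] //= [hp hP]; split; last exact: IH.
by move=> a x y; rewrite (hg _ _ _) (hp _ _ _).
Qed.

Lemma func_rank_n {R : realType} {H : lmodType R[i]} n : forall (P : seq (H -> R[i])),
  size P = n ->
  forall A : H -> H, lin A -> alllin P -> (forall y, allz P y -> A y = 0) ->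
  exists t, forall y, spanP t (A y).
Proof.
elim: n => [|n IHn] [|phi P] //= hs A hA; try discriminate.
  by move=> _ h; exists [::] => y; rewrite h //; apply/span_nil.
case: hs => hs.
move=> [hphi hP] hz.
case: (classic (exists y0, phi y0 <> 0)) => [[y0 hy0]|hno]; last first.
  apply: (IHn P hs) => // y hy; apply: hz; split => //.
  by apply: NNPP => hne; apply: hno; exists y.
pose pr y := (- (phi y / phi y0)) *: y0 + y.
have hpr : lin pr.
  move=> a u v; rewrite /pr (hphi _ _ _) mulrDl opprD scalerDl scalerDr scalerA mulrN mulrA.
  by rewrite addrACA.
have phipr y : phi (pr y) = 0.
  by rewrite /pr (hphi _ _ _) mulNr divfK ?addNr //; apply/eqP.
have hc : forall y, allz (map (fun psi x => psi (pr x)) P) y -> A (pr y) = 0.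
  by move=> y /allz_map hy; apply: hz; split.
have [t ht] := IHn _ (etrans (size_map _ P) hs) (fun y => A (pr y)) (lin_comp hA hpr) (@alllin_map _ _ P pr hpr hP) hc.
exists (A y0 :: t) => y; apply/span_cons.
exists (phi y / phi y0), (A (pr y)); split => //.
by rewrite -(hA _ _ _) /pr addrA scaleNr subrr add0r.
Qed.

Lemma func_rank {R : realType} {H : lmodType R[i]} (P : seq (H -> R[i])) (A : H -> H) :
  lin A -> alllin P -> (forall y, allz P y -> A y = 0) ->
  exists t, forall y, spanP t (A y).
Proof. exact: func_rank_n. Qed.

Lemma lin_id {R : realType} {H : lmodType R[i]} : lin (fun x : H => x).
Proof. by []. Qed.

Lemma lin_sub {R : realType} {H : lmodType R[i]} {f g : H -> H} : lin f -> lin g -> lin (fun x => f x - g x).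
Proof.
move=> hf hg a x y; rewrite (hf _ _ _) (hg _ _ _) scalerBr opprD !addrA; congr (_ + _).
by rewrite addrAC.
Qed.

Lemma lin_add {R : realType} {H : lmodType R[i]} {f g : H -> H} : lin f -> lin g -> lin (fun x => f x + g x).
Proof.
move=> hf hg a x y; rewrite (hf _ _ _) (hg _ _ _) scalerDr addrACA //.
Qed.

Lemma flinB {R : realType} {H : lmodType R[i]} {phi : H -> R[i]} : flin phi -> forall x y, phi (x - y) = phi x - phi y.
Proof.
move=> hp x y.
have h0 : phi 0 = 0.
  have := hp 1 0 0; rewrite scaler0 addr0 mul1r => e.
  have e2 : phi 0 + phi 0 - phi 0 = phi 0 - phi 0 by rewrite -e.
  by rewrite addrK subrr in e2.
have hN : phi (- y) = - phi y.
  by have := hp (-1) y 0; rewrite addr0 h0 addr0 scaleN1r mulN1r.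
by have := hp 1 x (- y); rewrite scale1r mul1r hN.
Qed.




Lemma ext_r {R : realType} {H : lmodType R[i]} {inner : H -> H -> R[i]}
  (hl : forall a x y z, inner (a *: x + y) z = a * inner x z + inner y z)
  (hd : forall x, inner x x = 0 -> x = 0) u v :
  (forall z, inner u z = inner v z) -> u = v.
Proof.
move=> h; apply/eqP; rewrite -subr_eq0; apply/eqP/hd.
have fl : flin (fun x => inner x (u - v)) by move=> a x y; exact: hl.
by rewrite (flinB fl) h subrr.
Qed.

Lemma ext_l {R : realType} {H : lmodType R[i]} {inner : H -> H -> R[i]}
  (hl : forall a x y z, inner (a *: x + y) z = a * inner x z + inner y z)
  (hc : forall x y, inner y x = (inner x y)^*)
  (hd : forall x, inner x x = 0 -> x = 0) u v :
  (forall z, inner z u = inner z v) -> u = v.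
Proof.
move=> h; apply: (ext_r hl hd) => z; by rewrite hc h -hc.
Qed.

Lemma innerBr {R : realType} {H : lmodType R[i]} {inner : H -> H -> R[i]}
  (hl : forall a x y z, inner (a *: x + y) z = a * inner x z + inner y z)
  (hc : forall x y, inner y x = (inner x y)^*) z x y :
  inner z (x - y) = inner z x - inner z y.
Proof.
have fl : flin (fun x => inner x z) by move=> a u v; exact: hl.
by rewrite [LHS]hc (flinB fl) rmorphB (hc x z) (hc y z).
Qed.

Lemma adj_swap {R : realType} {H : lmodType R[i]} {inner : H -> H -> R[i]}
  (hc : forall x y, inner y x = (inner x y)^*) {T Ts : H -> H} :
  is_adjoint inner T Ts -> forall u y, inner (Ts u) y = inner u (T y).
Proof. by move=> hT u y; rewrite hc -hT -hc. Qed.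

Lemma adj_lin {R : realType} {H : lmodType R[i]} {inner : H -> H -> R[i]}
  (hl : forall a x y z, inner (a *: x + y) z = a * inner x z + inner y z)
  (hc : forall x y, inner y x = (inner x y)^*)
  (hd : forall x, inner x x = 0 -> x = 0) {T Ts : H -> H} :
  is_adjoint inner T Ts -> lin Ts.
Proof.
move=> hT a x y; apply: (ext_r hl hd) => z.
by rewrite !(adj_swap hc hT) hl hl !(adj_swap hc hT).
Qed.

Lemma ortho {R : realType} {H : lmodType R[i]} {inner : H -> H -> R[i]}
  (hl : forall a x y z, inner (a *: x + y) z = a * inner x z + inner y z)
  (hc : forall x y, inner y x = (inner x y)^*) (s : seq H) u y :
  spanP s u -> allz (map (fun v y => inner y v) s) y -> inner u y = 0.
Proof.
elim: s u => [|a s IH] u /=.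
  move=> /span_nil -> _; have := hl 1 0 0 y; rewrite scaler0 addr0 mul1r => e.
  have e2 : inner 0 y + inner 0 y - inner 0 y = inner 0 y - inner 0 y by rewrite -e.
  by rewrite addrK subrr in e2.
move=> /span_cons [k [w [hw ->]]] [ha hz].
by rewrite hl (IH _ hw hz) hc ha rmorph0 mulr0 addr0.
Qed.

Lemma alllin_inner {R : realType} {H : lmodType R[i]} {inner : H -> H -> R[i]}
  (hl : forall a x y z, inner (a *: x + y) z = a * inner x z + inner y z) (s : seq H) :
  alllin (map (fun v y => inner y v) s).
Proof. elim: s => [|a s IH] //=; split => // b x y; exact: hl. Qed.

Theorem corollary3p7 (R : realType) (H : lmodType R[i]) (inner : H -> H -> R[i])
  (hH : is_hilbert inner) (V1 V1s V2 V2s : H -> H) :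
  isometric_pair inner V1 V1s V2 V2s ->
  finite_dim (E1 V1 V1s V2 V2s) ->
  finite_rank (commutator V1 V2s) ->
  finite_rank (defect V1 V1s V2 V2s).
Proof.
case: hH => hl [hc [_ [hd _]]].
move=> [[hV1 _] [[hV2 _] [a1 [a2 [i1 [i2 c12]]]]]] [e he] [s hs].
have hV1s : lin V1s := adj_lin hl hc hd a1.
have hV2s : lin V2s := adj_lin hl hc hd a2.
have cs x : V1s (V2s x) = V2s (V1s x).
  apply: (ext_l hl hc hd) => z.
  by rewrite -a1 -a2 -a2 -a1 c12.
pose K := commutator V1 V2s.
pose Ks y := V1s (V2 y) - V2 (V1s y).
have hKs : lin Ks := lin_sub (lin_comp hV1s hV2) (lin_comp hV2 hV1s).
have adjK x y : inner (K x) y = inner x (Ks y).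
  rewrite /K /commutator /Ks.
  have fl : flin (fun u => inner u y) by move=> a u v; exact: hl.
  by rewrite (flinB fl) (innerBr hl hc) (adj_swap hc a2) !a1 (adj_swap hc a2).
have Ks0 y : allz (map (fun v y => inner y v) s) y -> Ks y = 0.
  move=> hy; apply: hd; rewrite -adjK; apply: (ortho hl hc s _ _ _ hy).
  by apply: hs; exists (Ks y).
have [t1 ht1] := func_rank _ _ hKs (alllin_inner hl s) Ks0.
have k2 x : V2s (defect V1 V1s V2 V2s x) = - K (V1s x).
  rewrite /defect /K /commutator !(linD hV2s) !(linN hV2s) c12 !i2 -cs.
  by rewrite (addrAC (V2s x)) subrr add0r opprB addrC.
have k1 x : V1s (defect V1 V1s V2 V2s x) = - Ks (V2s x).
  rewrite /defect /Ks !(linD hV1s) !(linN hV1s) !i1.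
  by rewrite subrr sub0r opprB addrC.
pose Z u := V2 u - V1 (V2 (V1s u)).
have hZ : lin Z := lin_sub hV2 (lin_comp hV1 (lin_comp hV2 hV1s)).
pose f y := defect V1 V1s V2 V2s y - y.
have hdef : lin (defect V1 V1s V2 V2s) := lin_add (lin_sub (lin_sub lin_id (lin_comp hV1 hV1s)) (lin_comp hV2 hV2s)) (lin_comp hV1 (lin_comp hV2 (lin_comp hV1s hV2s))).
have hf : lin f := lin_sub hdef lin_id.
have key x : f (defect V1 V1s V2 V2s x) = V1 (Ks (V2s x)) + Z (K (V1s x)).
  move: (k1 x) (k2 x); move: (defect V1 V1s V2 V2s x) => y e1 e2.
  rewrite /f /defect e1 e2 (linN hV1s) !(linN hV2) !(linN hV1) !opprK /Z.
  by rewrite addrC !addrA addNr add0r.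
have [t ht] := preimage f e hf he (map V1 t1 ++ map Z s).
exists (t ++ e) => y [x ->]; apply: ht; rewrite key; apply: span_cat.
  exact: (span_map _ _ _ hV1 (ht1 _)).
exact: (span_map _ _ _ hZ (hs _ (ex_intro _ (V1s x) erefl))).
Qed.
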